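(* Let $\phi_1,\phi_2\colon\mathbb{R}\to[0,\infty)$ be continuous probability density functions such that $I_1=\{x:\phi_1(x)>0\}=(a_1,b_1)$ and $I_2=\{y:\phi_2(y)>0\}=(a_2,b_2)$ are bounded open intervals, with $a_1=0$. Let $F_1,F_2$ be the corresponding cumulative distribution functions, and define $K\colon[a_1,b_1]\to[a_2,b_2]$ by $K(x)=F_2^{-1}(F_1(x))$, where $F_2^{-1}$ is the inverse of the continuous strictly increasing bijection $F_2\colon[a_2,b_2]\to[0,1]$. Let $q\colon\mathbb{R}\to[0,\infty)$ be uniformly continuous and Lebesgue integrable, and set $$V=\int_{I_1} x\,\frac{\phi_1(x)}{\phi_2(K(x))}\,q(K(x))\,dx .$$ For $n\ge 1$ and $k=0,1,\dots,n$ let $x^{(n)}_k\in[a_1,b_1]$ be the point with $F_1(x^{(n)}_k)=k/n$ (so $x^{(n)}_0=a_1$, $x^{(n)}_n=b_1$, and $\int_{x^{(n)}_k}^{x^{(n)}_{k+1}}\phi_1=1/n$), let $y^{(n)}_k=K(x^{(n)}_k)$, and define $$V_n=\sum_{k=0}^{n-1}\frac{x^{(n)}_{k+1}+x^{(n)}_k}{2}\int_{y^{(n)}_k}^{y^{(n)}_{k+1}}q(s)\,ds .$$ Then $V_n\to V$ as $n\to\infty$.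
   Context: Financial interpretation (not needed for the claim): $\phi_1$ is the density of a one-step cash flow at horizon $T$, $\phi_2$ the density of the terminal value $S(T)$ of a traded benchmark security, $q$ the state price density of $S(T)$ (the second strike-derivative of the call price function), $V$ the value of the continuous portfolio of Arrow–Debreu securities replicating the cash flow distribution, and $V_n$ the value of the finite portfolio of cash-or-nothing calls approximating it. *)

(* Defs.v *)
From HB Require Import structures.
From mathcomp Require Import all_boot all_order all_algebra.
From mathcomp Require Import all_classical all_reals all_analysis.
Set Implicit Arguments. Unset Strict Implicit. Unset Printing Implicit Defensive.
Import Order.TTheory GRing.Theory Num.Theory.
Import numFieldNormedType.Exports.
Local Open Scope classical_set_scope.
Local Open Scope ring_scope.

Definition dens_cdf (R : realType) (phi : R -> R) (x : R) : R :=
  fine (\int[@lebesgue_measure R]_(t in `]-oo, x]) (phi t)%:E)%E.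

Definition cont_density (R : realType) (phi : R -> R) : Prop :=
  [/\ continuous phi, (forall x, 0 <= phi x) &
      (\int[@lebesgue_measure R]_x (phi x)%:E = 1)%E].

(* Main.v *)
Require Import Defs.
From HB Require Import structures.
From mathcomp Require Import all_boot all_order all_algebra.
From mathcomp Require Import all_classical all_reals all_analysis.
From mathcomp Require Import measurable_realfun.
From mathcomp Require Import ring lra.
Import Order.TTheory GRing.Theory Num.Theory.
Import numFieldNormedType.Exports.
Local Open Scope classical_set_scope.
Local Open Scope ring_scope.
Set Implicit Arguments. Unset Strict Implicit. Unset Printing Implicit Defensive.
Section S.
Context {R : realType}.
Notation mu := (@lebesgue_measure R).

Lemma cdf_derive (f : R -> R) : continuous f ->
  mu.-integrable setT (EFin \o f) ->
  forall x : R, is_derive x (1:R) (dens_cdf f) (f x).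
Proof.
move=> cf intf x.
have xx1 : x < x + 1 by rewrite ltrDl.
have := @continuous_FTC1 R f (BInfty _ true) x (x + 1) xx1 _ _ (cf x).
case.
- exact: integrableS intf.
- by rewrite ltNyr.
move=> dF F'.
have -> : f x = 'D_1 (dens_cdf f) x by rewrite -F' derive1E.
exact: derivableP.
Qed.

Lemma cdf_cont (f : R -> R) : continuous f ->
  mu.-integrable setT (EFin \o f) -> continuous (dens_cdf f).
Proof.
move=> cf intf x; have := cdf_derive cf intf x => -[dF _].
exact/differentiable_continuous/derivable1_diffP.
Qed.

Lemma cdf_nd (f : R -> R) : continuous f -> (forall x, 0 <= f x) ->
  mu.-integrable setT (EFin \o f) ->
  forall x y, x <= y -> dens_cdf f x <= dens_cdf f y.
Proof.
move=> cf f0 intf x y; rewrite le_eqVlt => /predU1P[->//|xy].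
have [c _ h] := @MVT R (dens_cdf f) f x y xy
  (fun z _ => cdf_derive cf intf z) (continuous_subspaceT (cdf_cont cf intf)).
by rewrite -subr_ge0 h mulr_ge0// subr_ge0 ltW.
Qed.

Section dens.
Context (phi : R -> R) (a b : R) (hd : cont_density phi)
  (hpos : [set x | 0 < phi x] = `]a, b[%classic).

Lemma dens_ge0 x : 0 <= phi x. Proof. by case: hd. Qed.
Lemma dens_cont : continuous phi. Proof. by case: hd. Qed.
Lemma dens_int1 : (\int[mu]_x (phi x)%:E = 1)%E. Proof. by case: hd. Qed.

Lemma dens_int : mu.-integrable setT (EFin \o phi).
Proof.
apply/integrableP; split.
  by apply/measurable_EFinP; exact: continuous_measurable_fun dens_cont.
rewrite (@eq_integral _ _ _ mu _ (fun x => (phi x)%:E)); last first.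
  by move=> x _ /=; rewrite ger0_norm// dens_ge0.
by rewrite dens_int1 ltry.
Qed.

Lemma dens_in x : a < x < b -> 0 < phi x.
Proof.
move=> xab; have : `]a, b[%classic x by rewrite /= in_itv.
by rewrite -hpos.
Qed.

Lemma dens_out x : ~ (a < x < b) -> phi x = 0.
Proof.
move=> xab; apply/eqP; rewrite eq_le dens_ge0 andbT leNgt; apply/negP => px.
have : [set x | 0 < phi x] x by [].
by rewrite hpos /= in_itv.
Qed.

Lemma dens_ab : a < b.
Proof.
rewrite ltNge; apply/negP => ba.
have := dens_int1.
rewrite (eq_integral (fun _ => 0%E)) ?integral0; last first.
  move=> x _; rewrite dens_out// => /andP[ax xb].
  by move: (lt_trans ax xb); rewrite ltNge ba.
by move=> /(congr1 fine) /= /eqP; rewrite eq_sym oner_eq0.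
Qed.

Notation F := (dens_cdf phi).

Lemma dens_F_le x : x <= a -> F x = 0.
Proof.
move=> xa; rewrite /dens_cdf (eq_integral (fun _ => 0%E)) ?integral0//.
move=> t; rewrite inE /= in_itv /= => tx.
rewrite dens_out// => /andP[hat _].
by move: (le_lt_trans xa hat); rewrite ltNge tx.
Qed.

Lemma dens_F_ge x : b <= x -> F x = 1.
Proof.
move=> bx; rewrite /dens_cdf integral_mkcond -[X in _ = X]/(fine 1%E).
rewrite -dens_int1; congr fine; apply: eq_integral => t _.
rewrite /patch; case: ifPn => //; rewrite notin_setE /= in_itv /= => /negP; rewrite -ltNge => xt.
rewrite dens_out// => /andP[_ tb].
by move: (le_lt_trans bx xt); rewrite ltNge (ltW tb).
Qed.

Lemma dens_F_lt x y : a <= x -> x < y -> y <= b -> F x < F y.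
Proof.
move=> ax xy yb.
have [c cxy h] := @MVT R F phi x y xy
  (fun z _ => cdf_derive dens_cont dens_int z)
  (continuous_subspaceT (cdf_cont dens_cont dens_int)).
rewrite -subr_gt0 h mulr_gt0// ?subr_gt0//.
apply: dens_in; move: cxy; rewrite in_itv /= => /andP[xc cy].
by rewrite (le_lt_trans ax xc) (lt_le_trans cy yb).
Qed.

End dens.
End S.

Section S.
Context {R : realType}.
Notation mu := (@lebesgue_measure R).

Lemma is_derive1_comp (f g : R -> R) x df dg :
  is_derive x (1:R) f df -> is_derive (f x) (1:R) g dg ->
  is_derive x (1:R) (g \o f) (dg * df).
Proof.
move=> hf hg.
have df1 : derivable f x 1 by case: hf.
have dg1 : derivable g (f x) 1 by case: hg.
have d : derivable (g \o f) x 1.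
  apply/derivable1_diffP; apply: differentiable_comp; exact/derivable1_diffP.
apply: is_derive_eq (derivableP d) _.
rewrite -derive1E derive1_comp// !derive1E.
by rewrite (@derive_val _ _ _ _ _ _ _ hf) (@derive_val _ _ _ _ _ _ _ hg).
Qed.

Lemma unif_cont_cont (f : R -> R) : unif_continuous f -> continuous f.
Proof.
move=> /unif_continuousP uf x; apply/cvgrPdist_lt => e e0.
have [d d0 h] := uf e e0.
exists d => // y /= xy; exact: (h (x, y)).
Qed.

Section main.
Context (phi1 phi2 : R -> R) (b1 a2 b2 : R) (K : R -> R)
  (hd1 : cont_density phi1) (hd2 : cont_density phi2)
  (hp1 : [set x | 0 < phi1 x] = `]0, b1[%classic)
  (hp2 : [set y | 0 < phi2 y] = `]a2, b2[%classic)
  (hK : forall x, 0 <= x <= b1 -> a2 <= K x <= b2 /\ dens_cdf phi2 (K x) = dens_cdf phi1 x).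

Local Notation F1 := (dens_cdf phi1).
Local Notation F2 := (dens_cdf phi2).

Let b10 : 0 < b1. Proof. exact: dens_ab hd1 hp1. Qed.
Let a2b2 : a2 < b2. Proof. exact: dens_ab hd2 hp2. Qed.

Lemma F2_inj y y' : a2 <= y <= b2 -> a2 <= y' <= b2 -> F2 y = F2 y' -> y = y'.
Proof.
move=> /andP[ay yb] /andP[ay' yb'] e.
have [yy'|y'y|//] := ltgtP y y'.
  by have := dens_F_lt hd2 hp2 ay yy' yb'; rewrite e ltxx.
by have := dens_F_lt hd2 hp2 ay' y'y yb; rewrite e ltxx.
Qed.

Lemma K_lt x y : 0 <= x -> x < y -> y <= b1 -> K x < K y.
Proof.
move=> x0 xy yb.
have [Kx Fx] : a2 <= K x <= b2 /\ F2 (K x) = F1 x.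
  by apply: hK; rewrite x0 (ltW (lt_le_trans xy yb)).
have [Ky Fy] : a2 <= K y <= b2 /\ F2 (K y) = F1 y.
  by apply: hK; rewrite yb (le_trans x0 (ltW xy)).
have := dens_F_lt hd1 hp1 x0 xy yb; rewrite -Fx -Fy.
move=> h; rewrite ltNge; apply/negP => yx.
have := cdf_nd (dens_cont hd2) (dens_ge0 hd2) (dens_int hd2) yx.
by rewrite leNgt h.
Qed.

Let cF1 := cdf_cont (dens_cont hd1) (dens_int hd1).
Let cF2 := cdf_cont (dens_cont hd2) (dens_int hd2).
Let ndF2 := cdf_nd (dens_cont hd2) (dens_ge0 hd2) (dens_int hd2).

Lemma K0 : K 0 = a2.
Proof.
have [h1 h2] : a2 <= K 0 <= b2 /\ F2 (K 0) = F1 0 by apply: hK; rewrite lexx ltW.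
apply: F2_inj => //; first by rewrite lexx ltW.
by rewrite h2 (dens_F_le hd1 hp1 (lexx 0)) (dens_F_le hd2 hp2 (lexx a2)).
Qed.

Lemma Kb1 : K b1 = b2.
Proof.
have [h1 h2] : a2 <= K b1 <= b2 /\ F2 (K b1) = F1 b1 by apply: hK; rewrite lexx ltW.
apply: F2_inj => //; first by rewrite lexx ltW.
by rewrite h2 (dens_F_ge hd1 hp1 (lexx b1)) (dens_F_ge hd2 hp2 (lexx b2)).
Qed.

Lemma K_in x : 0 < x < b1 -> a2 < K x < b2.
Proof.
move=> /andP[x0 xb]; rewrite -{1}K0 -Kb1.
by rewrite K_lt// ?lexx// ?K_lt// ltW.
Qed.

Lemma K_within : {within `[0, b1], continuous K}.
Proof.
apply: segment_inc_surj_continuous.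
  move=> x y; rewrite !in_itv /= => /andP[x0 xb] /andP[y0 yb].
  have [xy|yx|->] := ltgtP x y; last by rewrite !lexx.
  - by rewrite (ltW (K_lt x0 xy yb)).
  - by rewrite leNgt (K_lt y0 yx xb).
move=> y /=; rewrite in_itv /= K0 Kb1 => /andP[ay yb].
have Fy : Num.min (F1 0) (F1 b1) <= F2 y <= Num.max (F1 0) (F1 b1).
  rewrite (dens_F_le hd1 hp1 (lexx 0)) (dens_F_ge hd1 hp1 (lexx b1)).
  rewrite min_l ?ler01// max_r ?ler01//.
  rewrite -(dens_F_le hd2 hp2 (lexx a2)) -(dens_F_ge hd2 hp2 (lexx b2)).
  by rewrite !ndF2.
have [c cab Fc] := @IVT R F1 0 b1 (F2 y) (ltW b10) (continuous_subspaceT cF1) Fy.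
exists c; first by [].
move: cab; rewrite in_itv /= => cab.
have [h1 h2] := hK cab.
by apply: F2_inj => //; rewrite ?ay ?yb// h2.
Qed.

Lemma K_cont_in : {in `]0, b1[, continuous K}.
Proof. by have [] := (continuous_within_itvP _ b10).1 K_within. Qed.
Lemma K_right0 : K @ 0^'+ --> K 0.
Proof. by have [] := (continuous_within_itvP _ b10).1 K_within. Qed.
Lemma K_leftb1 : K @ b1^'- --> K b1.
Proof. by have [] := (continuous_within_itvP _ b10).1 K_within. Qed.

Definition ginv (s : R) := xget a2 [set y | a2 <= y <= b2 /\ F2 y = s].

Lemma ginvK y : a2 <= y <= b2 -> ginv (F2 y) = y.
Proof.
move=> yab.
have [h1 h2] := @xgetI _ a2 [set y' | a2 <= y' <= b2 /\ F2 y' = F2 y] y (conj yab erefl).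
exact: F2_inj h1 yab h2.
Qed.

Lemma K_derive x : 0 < x < b1 -> is_derive x (1:R) K (phi1 x / phi2 (K x)).
Proof.
move=> xI; have yI := K_in xI.
have xI' : 0 <= x <= b1 by case/andP: xI => *; rewrite !ltW.
have [_ FK] := hK xI'.
have p2 : phi2 (K x) != 0 by rewrite gt_eqF// (dens_in hp2).
have d2 : is_derive (F2 (K x)) (1:R) ginv (phi2 (K x))^-1.
  apply: is_derive_inverse => //.
  - have : K x \in `]a2, b2[ by rewrite in_itv.
    move=> /near_in_itvoo; apply: filterS => y; rewrite in_itv /= => /andP[ay yb].
    by rewrite ginvK// !ltW.
  - by near=> y; exact: cF2.
  - exact: cdf_derive (dens_cont hd2) (dens_int hd2) (K x).
rewrite FK in d2.
have := is_derive1_comp (cdf_derive (dens_cont hd1) (dens_int hd1) x) d2.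
rewrite mulrC => h; apply: near_eq_is_derive h.
have : x \in `]0, b1[ by rewrite in_itv.
move=> /near_in_itvoo; apply: filterS => z; rewrite in_itv /= => /andP[z0 zb].
have zI : 0 <= z <= b1 by rewrite !ltW.
have [Kz FKz] := hK zI.
by rewrite /= -FKz ginvK.
Unshelve. all: by end_near. Qed.

End main.
End S.

Section S4.
Context {R : realType}.
Notation mu := (@lebesgue_measure R).

Lemma is_derive_cont (f : R -> R) x df : is_derive x (1:R) f df -> {for x, continuous f}.
Proof. by case=> d _; exact/differentiable_continuous/derivable1_diffP. Qed.

Section main2.
Context (phi1 phi2 : R -> R) (b1 a2 b2 : R) (K : R -> R)
  (hd1 : cont_density phi1) (hd2 : cont_density phi2)
  (hp1 : [set x | 0 < phi1 x] = `]0, b1[%classic)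
  (hp2 : [set y | 0 < phi2 y] = `]a2, b2[%classic)
  (hK : forall x, 0 <= x <= b1 -> a2 <= K x <= b2 /\ dens_cdf phi2 (K x) = dens_cdf phi1 x)
  (q : R -> R) (q0 : forall s, 0 <= q s) (qu : unif_continuous q)
  (qi : mu.-integrable setT (EFin \o q)).

Let b10 : 0 < b1. Proof. exact: dens_ab hd1 hp1. Qed.
Let Kd := K_derive hd1 hd2 hp1 hp2 hK.
Let Kin := K_in hd1 hd2 hp1 hp2 hK.
Let Kc := K_cont_in hd1 hd2 hp1 hp2 hK.
Let cq := unif_cont_cont qu.

Definition gg x := phi1 x / phi2 (K x) * q (K x).
Definition HH x := dens_cdf q (K x).

Lemma HH_derive (x : R) : 0 < x < b1 -> is_derive x (1:R) HH (gg x).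
Proof.
move=> xI; have := is_derive1_comp (Kd xI) (cdf_derive cq qi (K x)).
by move=> h; apply: is_derive_eq h _; rewrite mulrC.
Qed.

Lemma gg_cont (x : R) : 0 < x < b1 -> {for x, continuous gg}.
Proof.
move=> xI; have cK : {for x, continuous K} by apply: Kc; rewrite in_itv.
have cp1 : {for x, continuous phi1} by exact: (dens_cont hd1).
have cp2 : {for K x, continuous phi2} by exact: (dens_cont hd2).
have cqK : {for K x, continuous q} by exact: cq.
rewrite /gg; apply: continuousM.
  apply: continuousM; first exact: cp1.
  apply: continuousV.
    by rewrite gt_eqF// (dens_in hp2) ?Kin.
  exact: continuous_comp cK cp2.
exact: continuous_comp cK cqK.
Qed.

Lemma change_cc (c d : R) : 0 < c -> c < d -> d < b1 ->
  (\int[mu]_(x in `[c, d]) (gg x)%:E = (HH d - HH c)%:E)%E.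
Proof.
move=> c0 cd db.
have Id x : c <= x <= d -> 0 < x < b1.
  by case/andP => cx xd; rewrite (lt_le_trans c0 cx) (le_lt_trans xd db).
rewrite EFinB; apply: continuous_FTC2 => //.
- apply: continuous_in_subspaceT => x; rewrite inE /= in_itv /= => xI.
  exact/gg_cont/Id.
- split.
  + move=> x; rewrite in_itv /= => /andP[cx xd].
    by case: (HH_derive (Id x _)) => //; rewrite !ltW.
  + apply: cvg_at_right_filter; apply: is_derive_cont (HH_derive (Id c _)).
    by rewrite lexx ltW.
  + apply: cvg_at_left_filter; apply: is_derive_cont (HH_derive (Id d _)).
    by rewrite lexx ltW.
- move=> x; rewrite in_itv /= => /andP[cx xd].
  have h := HH_derive (Id x _); rewrite derive1E.
  by apply: derive_val; apply: h; rewrite !ltW.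
Qed.


Let cQ := cdf_cont cq qi.

Lemma gg_ge0 x : 0 <= gg x.
Proof. by rewrite /gg mulr_ge0 ?divr_ge0 ?(dens_ge0 hd1) ?(dens_ge0 hd2) ?q0. Qed.

Lemma HH_right (c : R) : 0 <= c -> c < b1 -> HH x @[x --> c^'+] --> HH c.
Proof.
move=> c0 cb.
have Kr : K x @[x --> c^'+] --> K c.
  move: c0; rewrite le_eqVlt => /predU1P[<-|c0].
    exact: (K_right0 hd1 hd2 hp1 hp2 hK).
  by apply: cvg_at_right_filter; apply: Kc; rewrite in_itv /= c0 cb.
have cQc : {for K c, continuous (dens_cdf q)} by exact: cQ.
exact: (cvg_comp _ _ Kr cQc).
Qed.

Lemma HH_left (d : R) : 0 < d -> d <= b1 -> HH x @[x --> d^'-] --> HH d.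
Proof.
move=> d0 db.
have Kl : K x @[x --> d^'-] --> K d.
  move: db; rewrite le_eqVlt => /predU1P[->|db].
    exact: (K_leftb1 hd1 hd2 hp1 hp2 hK).
  by apply: cvg_at_left_filter; apply: Kc; rewrite in_itv /= d0 db.
have cQd : {for K d, continuous (dens_cdf q)} by exact: cQ.
exact: (cvg_comp _ _ Kl cQd).
Qed.

Lemma change_oo (c d : R) : 0 <= c -> c < d -> d <= b1 ->
  (\int[mu]_(x in `]c, d[) (gg x)%:E = (HH d - HH c)%:E)%E.
Proof.
move=> c0 cd db.
pose e := (d - c) / 4.
have e0 : 0 < e by rewrite divr_gt0// subr_gt0.
pose u n := e * (n.+1%:R)^-1.
have u0 n : 0 < u n by rewrite mulr_gt0// invr_gt0.
have ue n : u n <= e.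
  by rewrite -[X in _ <= X]mulr1 ler_pM2l// invf_le1// ler1n.
have unon m n : (m <= n)%N -> u n <= u m.
  by move=> mn; rewrite ler_pM2l// lef_pV2 ?posrE// ler_nat.
have ucvg : u n @[n --> \oo] --> 0.
  by rewrite -(mulr0 e); apply: cvgMl_tmp; exact: cvg_harmonic.
have e2 : 2 * e < d - c.
  rewrite /e; lra.
have Sin n : c + u n < d - u n.
  rewrite -ltrBrDl addrAC ltrBrDr -mulr2n -mulr_natl (le_lt_trans _ e2)//.
  by rewrite ler_pM2l.
pose S n := `[c + u n, d - u n]%classic.
have SD n : S n `<=` `]c, d[%classic.
  move=> x; rewrite /S /= !in_itv /= => /andP[cx xd].
  by rewrite (lt_le_trans _ cx) ?(le_lt_trans xd)// ?ltrDl ?gtrBl.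
have hS n : (\int[mu]_(x in S n) (gg x)%:E = (HH (d - u n) - HH (c + u n))%:E)%E.
  apply: change_cc.
  - by rewrite (le_lt_trans c0)// ltrDl.
  - exact: Sin.
  - by rewrite (lt_le_trans _ db)// gtrBl.
pose g' n := (EFin \o gg) \_ (S n).
have mD : measurable `]c, d[%classic by exact: measurable_itv.
have mgg : measurable_fun `]c, d[ (EFin \o gg).
  apply/measurable_EFinP; apply: subspace_continuous_measurable_fun => //.
  apply: continuous_in_subspaceT => x; rewrite inE /= in_itv /= => /andP[cx xd].
  by apply: gg_cont; rewrite (le_lt_trans c0 cx) (lt_le_trans xd db).
have mg' n : measurable_fun `]c, d[ (g' n).
  have h := (measurable_restrict (EFin \o gg) (measurable_itv `[c + u n, d - u n]) mD).1.
  apply: h; apply: measurable_funS mgg => //; exact: subIsetl.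
have g'0 n x : `]c, d[%classic x -> (0 <= g' n x)%E.
  by move=> _; rewrite /g' /patch; case: ifPn => // _; rewrite lee_fin gg_ge0.
have nd x : `]c, d[%classic x -> {homo g'^~ x : n m / (n <= m)%N >-> (n <= m)%E}.
  move=> _ m n mn; rewrite /g' /patch; case: ifPn => [|_]; last first.
    by case: ifPn => // _; rewrite lee_fin gg_ge0.
  rewrite inE /S /= in_itv /= => /andP[cx xd].
  rewrite ifT// inE /= in_itv /=.
  by rewrite (le_trans _ cx) ?(le_trans xd) ?lerD2l ?lerD2l ?lerN2 ?unon.
have cvgM := @cvg_monotone_convergence _ _ _ mu _ mD _ mg' g'0 nd.
have -> : (\int[mu]_(x in `]c, d[) (gg x)%:E =
    \int[mu]_(x in `]c, d[) (fun x => limn (g'^~ x)) x)%E.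
  apply: eq_integral => x; rewrite inE /= in_itv /= => /andP[cx xd].
  have m0 : 0 < Num.min (x - c) (d - x) by rewrite lt_min !subr_gt0 cx xd.
  have hn := @cvgr_le _ _ _ _ u 0 ucvg _ m0.
  have hev : \forall n \near \oo, g' n x = (gg x)%:E.
    near=> n.
    have : u n <= Num.min (x - c) (d - x) by near: n; exact: hn.
    rewrite le_min => /andP[h1 h2].
    rewrite /g' /patch ifT// inE /S /= in_itv /=.
    by rewrite -lerBrDl h1 lerBrDl -lerBrDr h2.
  by rewrite (lim_near_cst _ hev).
apply: (cvg_unique _ cvgM) => /=.
  exact: ereal_hausdorff.
have -> : (fun n => \int[mu]_(x in `]c, d[) g' n x)%E =
    (fun n => (HH (d - u n) - HH (c + u n))%:E).
  apply/funext => n; rewrite /g' -integral_mkcondr -hS setIidr//.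
apply: cvg_EFin; first exact: nearW.
have hl := (cvg_at_leftP HH d (HH d)).1 (HH_left (le_lt_trans c0 cd) db).
have hr := (cvg_at_rightP HH c (HH c)).1 (HH_right c0 (lt_le_trans cd db)).
have hdu : (d - u n) @[n --> \oo] --> d.
  by rewrite -[X in _ --> X]subr0; apply: cvgB => //; exact: cvg_cst.
have hcu : (c + u n) @[n --> \oo] --> c.
  by rewrite -[X in _ --> X]addr0; apply: cvgD => //; exact: cvg_cst.
have dlt n : d - u n < d by rewrite gtrBl.
have cgt n : c < c + u n by rewrite ltrDl.
have h1 := hl (fun n => d - u n) (conj dlt hdu).
have h2 := hr (fun n => c + u n) (conj cgt hcu).
exact: cvgB h1 h2.
Unshelve. all: by end_near. Qed.

End main2.
End S4.

Section S5.
Context {R : realType}.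
Notation mu := (@lebesgue_measure R).

Lemma cdf_diff (f : R -> R) (y z : R) : mu.-integrable setT (EFin \o f) ->
  y <= z -> Rintegral mu `[y, z] f = dens_cdf f z - dens_cdf f y.
Proof.
move=> fi yz.
rewrite /dens_cdf -!/(Rintegral mu _ f).
rewrite (@Rintegral_itvB R f (BInfty _ true) (BRight z) y) //.
- by rewrite Rintegral_itv_obnd_cbnd//; exact: integrableS fi.
- exact: integrableS fi.
Qed.

Section mesh.
Context (phi1 : R -> R) (b1 : R) (hd1 : cont_density phi1)
  (hp1 : [set x | 0 < phi1 x] = `]0, b1[%classic).
Local Notation F1 := (dens_cdf phi1).

Lemma mesh (e : R) : 0 < e -> exists2 eta : R, 0 < eta &
  forall x y, 0 <= x -> x <= y -> y <= b1 -> F1 y - F1 x < eta -> y - x < e.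
Proof.
move=> e0.
have cF1 := cdf_cont (dens_cont hd1) (dens_int hd1).
have ndF1 := cdf_nd (dens_cont hd1) (dens_ge0 hd1) (dens_int hd1).
have [b1e|eb1] := ltP b1 e.
  exists 1 => // x y x0 xy yb _; lra.
pose ph t := F1 (t + e) - F1 t.
have cph : continuous ph.
  move=> t; apply: cvgB; last exact: cF1.
  apply: (@cvg_comp _ _ _ (fun t => t + e) F1).
    by apply: cvgD; [exact: cvg_id | exact: cvg_cst].
  exact: cF1.
have [c cI cmin] := @EVT_min R ph 0 (b1 - e) (ltac:(lra)) (continuous_subspaceT cph).
move: (cI); rewrite in_itv /= => /andP[c0 cb].
exists (ph c).
  by rewrite /ph subr_gt0 (dens_F_lt hd1 hp1) ?ltrDl//; lra.
move=> x y x0 xy yb hF; rewrite ltNge; apply/negP => eyx.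
have xI : x \in `[0, b1 - e] by rewrite in_itv /=; apply/andP; split; lra.
have := cmin x xI; rewrite /ph => h; rewrite /ph in hF.
have : F1 (x + e) <= F1 y by apply: ndF1; lra.
lra.
Qed.
End mesh.
End S5.

Section S6.
Context {R : realType}.
Notation mu := (@lebesgue_measure R).

Lemma itv_oc_disj (a b c : R) : [disjoint `]a, b]%classic & `]b, c]%classic].
Proof.
rewrite disj_set2E; apply/eqP; apply/seteqP; split => // x [].
by rewrite /= !in_itv /= => /andP[_ h1] /andP[h2 _]; lra.
Qed.

Lemma decomp_oc (h : R -> \bar R) (t : nat -> R) (m : nat) :
  (forall k, (k < m)%N -> t k <= t k.+1) ->
  measurable_fun `]t 0, t m]%classic h -> (forall x : R, `]t 0, t m]%classic x -> (0 <= h x)%E) ->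
  (\int[mu]_(x in `]t 0%N, t m]) h x =
   \sum_(k < m) \int[mu]_(x in `]t k, t k.+1]) h x)%E.
Proof.
move=> tnd mh h0.
have tle j : forall i, (i <= j)%N -> (j <= m)%N -> t i <= t j.
  elim: j => [|j IH] i ij jm; first by move: ij; rewrite leqn0 => /eqP->.
  move: ij; rewrite leq_eqVlt => /orP[/eqP->//|ij].
  exact: le_trans (IH i ij (ltnW jm)) (tnd j jm).
suff H : forall j, (j <= m)%N -> (\int[mu]_(x in `]t 0%N, t j]) h x =
   \sum_(k < j) \int[mu]_(x in `]t k, t k.+1]) h x)%E by exact: H.
elim => [|j IH] jm; first by rewrite set_itvoc0 integral_set0 big_ord0.
rewrite big_ord_recr /= -IH ?(ltnW jm)//.
have sub : `]t 0, t j.+1] `<=` `]t 0, t m]%classic.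
  by apply: subset_itvl; rewrite bnd_simp tle.
rewrite (@itv_bndbnd_setU _ _ (BRight (t 0)) (BRight (t j)) (BRight (t j.+1))); last 2 first.
  by rewrite bnd_simp tle// ltnW.
  by rewrite bnd_simp tnd.
rewrite ge0_integral_setU//.
- apply: measurable_funS mh => //.
  by rewrite -itv_bndbnd_setU ?bnd_simp ?tnd ?tle// ltnW.
- move=> x xI; apply: h0; apply: sub.
  by move: xI; rewrite -itv_bndbnd_setU ?bnd_simp ?tnd ?tle// ltnW.
- exact: itv_oc_disj.
Qed.

Section main3.
Context (phi1 phi2 : R -> R) (b1 a2 b2 : R) (K : R -> R)
  (hd1 : cont_density phi1) (hd2 : cont_density phi2)
  (hp1 : [set x | 0 < phi1 x] = `]0, b1[%classic)
  (hp2 : [set y | 0 < phi2 y] = `]a2, b2[%classic)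
  (hK : forall x, 0 <= x <= b1 -> a2 <= K x <= b2 /\ dens_cdf phi2 (K x) = dens_cdf phi1 x)
  (q : R -> R) (q0 : forall s, 0 <= q s) (qu : unif_continuous q)
  (qi : mu.-integrable setT (EFin \o q))
  (xs : nat -> nat -> R)
  (hxs : forall n k, (0 < n)%N -> (k <= n)%N ->
     0 <= xs n k <= b1 /\ dens_cdf phi1 (xs n k) = k%:R / n%:R).

Local Notation F1 := (dens_cdf phi1).
Local Notation g := (gg phi1 phi2 K q).
Local Notation H := (HH K q).
Let b10 : 0 < b1. Proof. exact: dens_ab hd1 hp1. Qed.
Let ndF1 := cdf_nd (dens_cont hd1) (dens_ge0 hd1) (dens_int hd1).

Lemma xs_lt n k : (k < n)%N -> xs n k < xs n k.+1.
Proof.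
move=> kn; have n0 : (0 < n)%N by apply: leq_ltn_trans (leq0n k) kn.
have [_ e1] := hxs n0 (ltnW kn).
have [_ e2] := hxs n0 kn.
rewrite ltNge; apply/negP => /ndF1; rewrite e1 e2.
by rewrite ler_pM2r ?invr_gt0 ?ltr0n// ler_nat ltnn.
Qed.

Lemma xs0 n : (0 < n)%N -> xs n 0 = 0.
Proof.
move=> n0; have [/andP[x0 xb] e] := hxs n0 (leq0n n).
apply/eqP; rewrite eq_le x0 andbT leNgt; apply/negP => h.
have := dens_F_lt hd1 hp1 (lexx 0) h xb.
by rewrite e (dens_F_le hd1 hp1 (lexx 0)) mul0r ltxx.
Qed.

Lemma xsn n : (0 < n)%N -> xs n n = b1.
Proof.
move=> n0; have [/andP[x0 xb] e] := hxs n0 (leqnn n).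
apply/eqP; rewrite eq_le xb /= leNgt; apply/negP => h.
have := dens_F_lt hd1 hp1 x0 h (lexx b1).
by rewrite e (dens_F_ge hd1 hp1 (lexx b1)) divff ?pnatr_eq0 -?lt0n// ltxx.
Qed.

Lemma gmeas : measurable_fun `]0, b1[ (EFin \o g).
Proof.
apply/measurable_EFinP; apply: subspace_continuous_measurable_fun => //.
apply: continuous_in_subspaceT => x; rewrite inE /= in_itv /= => xI.
exact: (gg_cont hd1 hd2 hp1 hp2 hK qu xI).
Qed.

Lemma hxmeas : measurable_fun `]0, b1[ (fun x => (x * g x)%:E).
Proof.
apply/measurable_EFinP; apply: measurable_funM => //.
by have /measurable_EFinP := gmeas.
Qed.

Lemma piece (c d : R) : 0 <= c -> c < d -> d <= b1 ->
  ((c * (H d - H c))%:E <= \int[mu]_(x in `]c, d[) (x * g x)%:E)%E /\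
  (\int[mu]_(x in `]c, d[) (x * g x)%:E <= (d * (H d - H c))%:E)%E.
Proof.
move=> c0 cd db.
have sub : `]c, d[ `<=` `]0, b1[%classic.
  by move=> x; rewrite /= !in_itv /= => /andP[cx xd]; apply/andP; split; lra.
have mg : measurable_fun `]c, d[ (EFin \o g) by exact: measurable_funS gmeas.
have mg' : measurable_fun `]c, d[ g by apply/measurable_EFinP.
have mh : measurable_fun `]c, d[ (fun x => (x * g x)%:E) by exact: measurable_funS hxmeas.
have g0 := gg_ge0 K hd1 hd2 q0.
have eA := change_oo hd1 hd2 hp1 hp2 hK q0 qu qi c0 cd db.
have cst_eq (k : R) : 0 <= k -> (k * (H d - H c))%:E =
    (\int[mu]_(x in `]c, d[) (k * g x)%:E)%E.
  move=> k0; rewrite EFinM -eA -ge0_integralZl_EFin//.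
  by move=> x _; rewrite lee_fin.
split.
- rewrite cst_eq//; apply: ge0_le_integral => //.
  + by move=> x _; rewrite lee_fin mulr_ge0.
  + by apply/measurable_EFinP; exact: measurable_funM.
  + move=> x; rewrite /= in_itv /= => /andP[cx _].
    by rewrite lee_fin ler_wpM2r// ltW.
- rewrite cst_eq ?(le_trans c0 (ltW cd))//; apply: ge0_le_integral => //.
  + move=> x; rewrite /= in_itv /= => /andP[cx _].
    by rewrite lee_fin mulr_ge0// (le_trans c0 (ltW cx)).
  + by apply/measurable_EFinP; exact: measurable_funM.
  + move=> x; rewrite /= in_itv /= => /andP[_ xd].
    by rewrite lee_fin ler_wpM2r// ltW.
Qed.


Lemma V_sum n : (0 < n)%N ->
  (\int[mu]_(x in `]0%R, b1[) (x * g x)%:E =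
   \sum_(k < n) \int[mu]_(x in `]xs n k, xs n k.+1[) (x * g x)%:E)%E.
Proof.
move=> n0.
rewrite integral_itv_bndo_bndc; last exact: hxmeas.
have e0 := xs0 n0; have en := xsn n0.
have -> : `]0, b1]%classic = `]xs n 0%N, xs n n]%classic by rewrite e0 en.
rewrite decomp_oc.
- apply: eq_bigr => k _.
  have kn := ltn_ord k.
  have [/andP[x0 _] _] := hxs n0 (ltnW kn).
  have [/andP[_ x1] _] := hxs n0 kn.
  rewrite -integral_itv_bndo_bndc//.
  apply: measurable_funS hxmeas => //.
  by move=> x; rewrite /= !in_itv /= => /andP[h1 h2]; apply/andP; split; lra.
- by move=> k kn; exact/ltW/xs_lt.
- rewrite e0 en; apply/emeasurable_fun_itv_bndo_bndcP; exact: hxmeas.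
- move=> x; rewrite e0 en /= in_itv /= => /andP[x0 _].
  by rewrite lee_fin; apply: mulr_ge0; [exact: ltW | exact: (gg_ge0 K hd1 hd2 q0)].
Qed.

Lemma main_conv :
  (fun n : nat => (\sum_(k < n) ((xs n k.+1 + xs n k) / 2 *
       Rintegral mu `[K (xs n k), K (xs n k.+1)] q))%:E) @ \oo -->
  (\int[mu]_(x in `]0%R, b1[) (x * g x)%:E)%E.
Proof.
set W := (\int[mu]_(x in `]0%R, b1[) (x * g x)%:E)%E.
pose B n k := (\int[mu]_(x in `]xs n k, xs n k.+1[) (x * g x)%:E)%E.
pose A n k := H (xs n k.+1) - H (xs n k).
have cq := unif_cont_cont qu.
have ndQ := cdf_nd cq q0 qi.
have Kl := K_lt hd1 hd2 hp1 hK.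
have A0 n k : (k < n)%N -> 0 <= A n k.
  move=> kn; have n0 : (0 < n)%N by apply: leq_ltn_trans (leq0n k) kn.
  have [/andP[x0 _] _] := hxs n0 (ltnW kn).
  have [/andP[_ x1] _] := hxs n0 kn.
  by rewrite subr_ge0; apply: ndQ; apply/ltW/Kl => //; exact: xs_lt.
have Bb n k : (k < n)%N ->
    ((xs n k * A n k)%:E <= B n k /\ B n k <= (xs n k.+1 * A n k)%:E)%E.
  move=> kn; have n0 : (0 < n)%N by apply: leq_ltn_trans (leq0n k) kn.
  have [/andP[x0 _] _] := hxs n0 (ltnW kn).
  have [/andP[_ x1] _] := hxs n0 kn.
  exact: piece x0 (xs_lt kn) x1.
have Bfin n k : (k < n)%N -> B n k = (fine (B n k))%:E.
  move=> kn; rewrite fineK// ge0_fin_numE.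
    by rewrite (le_lt_trans (Bb n k kn).2)// ltry.
  have n0 : (0 < n)%N by apply: leq_ltn_trans (leq0n k) kn.
  have [/andP[x0 _] _] := hxs n0 (ltnW kn).
  apply: integral_ge0 => x; rewrite /= in_itv /= => /andP[xk _].
  by rewrite lee_fin mulr_ge0 ?(gg_ge0 K hd1 hd2 q0)// (le_trans x0 (ltW xk)).
have Bb' n k : (k < n)%N -> xs n k * A n k <= fine (B n k) <= xs n k.+1 * A n k.
  move=> kn; have [h1 h2] := Bb n k kn.
  by rewrite (Bfin n k kn) !lee_fin in h1 h2; rewrite h1 h2.
have Wn n : (0 < n)%N -> W = (\sum_(k < n) fine (B n k))%:E.
  move=> n0; rewrite /W (V_sum n0) -sumEFin; apply: eq_bigr => k _.
  exact: Bfin.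
set w := \sum_(k < 1) fine (B 1%N k).
have Ww : W = w%:E by exact: Wn.
rewrite Ww; apply: cvg_EFin; first exact: nearW.
apply/cvgrPdist_le => e e0.
pose C := H b1 - H 0.
have C0 : 0 <= C.
  by rewrite subr_ge0; apply: ndQ; apply/ltW/Kl => //; exact: lexx.
pose eps := e / (C + 1).
have eps0 : 0 < eps by rewrite divr_gt0// ltr_wpDl.
have [eta eta0 hm] := mesh hd1 hp1 eps0.
near=> n.
have n0 : (0 < n)%N by near: n; exact: nbhs_infty_ge.
have neta : eta^-1 < n%:R by near: n; exact: nbhs_infty_gtr.
have hw : w = \sum_(k < n) fine (B n k) by apply: EFin_inj; rewrite -Ww -Wn.
rewrite /= hw.
rewrite [X in _ - X](eq_bigr (fun k : 'I_n => (xs n k.+1 + xs n k) / 2 * A n k)); last first.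
  move=> k _; have kn := ltn_ord k.
  have [/andP[x0 _] _] := hxs n0 (ltnW kn).
  have [/andP[_ x1] _] := hxs n0 kn.
  by rewrite cdf_diff// ltW// Kl// xs_lt.
rewrite -sumrB; apply: le_trans (ler_norm_sum _ _ _) _.
apply: (@le_trans _ _ (\sum_(k < n) eps * A n k)).
  apply: ler_sum => k _; have kn := ltn_ord k.
  have [/andP[x0 _] e1] := hxs n0 (ltnW kn).
  have [/andP[_ x1] e2] := hxs n0 kn.
  have mk : xs n k.+1 - xs n k < eps.
    apply: hm => //; first exact/ltW/xs_lt.
    rewrite e1 e2 -mulrBl -natrB ?leqnSn// subSnn div1r.
    by rewrite -(invrK eta) ltf_pV2 ?posrE ?invr_gt0 ?ltr0n.
  have Ak := A0 n k kn.
  have [lo hi] := andP (Bb' n k kn).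
  have hQP : xs n k.+1 * A n k - xs n k * A n k <= eps * A n k.
    by rewrite -mulrBl ler_wpM2r// ltW.
  have em : (xs n k.+1 + xs n k) / 2 * A n k =
      (xs n k * A n k + xs n k.+1 * A n k) / 2 by rewrite mulrAC mulrDl addrC.
  rewrite em ler_norml.
  move: lo hi hQP; set P := xs n k * A n k; set Q := xs n k.+1 * A n k.
  set fB := fine (B n k); set EA := eps * A n k.
  move=> lo hi hQP; apply/andP; split; lra.
rewrite -mulr_sumr.
have tel : \sum_(k < n) A n k = C.
  rewrite /A -(big_mkord xpredT (fun k => H (xs n k.+1) - H (xs n k))).
  by rewrite telescope_sumr// xsn// xs0.
rewrite tel /eps mulrAC ler_pdivrMr ?ltr_wpDl//.
by rewrite ler_pM2l// lerDl.
Unshelve. all: by end_near. Qed.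

End main3.
End S6.

Unset Implicit Arguments.
Set Strict Implicit.

Theorem mainTheorem1 (R : realType) (phi1 phi2 q : R -> R) (a1 b1 a2 b2 : R)
  (K : R -> R) (xs : nat -> nat -> R) :
  cont_density phi1 -> cont_density phi2 ->
  [set x | 0 < phi1 x] = `]a1, b1[%classic ->
  [set y | 0 < phi2 y] = `]a2, b2[%classic ->
  a1 = 0 ->
  (* K = F2^{-1} o F1 on [a1, b1] *)
  (forall x, a1 <= x <= b1 -> a2 <= K x <= b2 /\ dens_cdf phi2 (K x) = dens_cdf phi1 x) ->
  (forall s, 0 <= q s) ->
  unif_continuous q ->
  (@lebesgue_measure R).-integrable setT (fun s => (q s)%:E) ->
  (* x^(n)_k in [a1,b1] with F1(x^(n)_k) = k/n *)
  (forall n k, (0 < n)%N -> (k <= n)%N ->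
     a1 <= xs n k <= b1 /\ dens_cdf phi1 (xs n k) = k%:R / n%:R) ->
  let V := (\int[@lebesgue_measure R]_(x in `]a1, b1[)
              (x * phi1 x / phi2 (K x) * q (K x))%:E)%E in
  let Vn := fun n : nat =>
    \sum_(k < n) ((xs n k.+1 + xs n k) / 2 *
       Rintegral (@lebesgue_measure R) `[K (xs n k), K (xs n k.+1)] q) in
  (fun n => (Vn n)%:E) @ \oo --> V.
Proof.
move=> hd1 hd2 hp1 hp2 a10 hK q0 qu qi hxs V Vn; subst a1.
have -> : V = (\int[@lebesgue_measure R]_(x in `]0%R, b1[)
    (x * gg phi1 phi2 K q x)%:E)%E.
  by rewrite /V; apply: eq_integral => x _; rewrite /gg !mulrA.
exact: (main_conv hd1 hd2 hp1 hp2 hK q0 qu qi hxs).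
Qed.
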